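(* Let $k\geq 2$ be an integer. For integers $n\ge 0$ and $t\ge 0$ let $\mathrm{IB}_k(n,t)$ be the number of length-$n$ words over $\Sigma_k$ whose largest BP-factorization has width $t$. Then $\mathrm{IB}_k(0,0)=1$, and for every integer $n\geq 1$ we have $\mathrm{IB}_k(2n,2)=u_n$ and $\mathrm{IB}_k(n,1)=u_n$. Moreover, for all integers $n\geq 0$ and $t\geq 3$, \[ \mathrm{IB}_k(n,t)=\begin{cases} \sum_{i=1}^{(n-t)/2+1} u_{i}\, \mathrm{IB}_k(n-2i, t-2), & \text{if $n$, $t$ are both even;}\\ \sum_{i=1}^{(n-t+1)/2} u_{2i}\, \mathrm{IB}_k(n-2i,t-1), & \text{if $n$ is even and $t$ is odd;}\\ 0, & \text{if $n$ is odd and $t$ is even;}\\ \sum_{i=1}^{(n-t)/2+1}u_{2i-1}\,\mathrm{IB}_k(n-2i+1,t-1), & \text{if $n$, $t$ are both odd,} \end{cases} \] where a sum whose upper limit is less than $1$ is zero.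
   Context: $\Sigma_k=\{0,1,\ldots,k-1\}$. A border of a word $w$ is a non-empty word that is both a proper prefix and a proper suffix of $w$; $w$ is unbordered if it has no border (the empty word counts as unbordered). $u_n$ denotes the number of unbordered words of length $n$ over $\Sigma_k$; it satisfies $u_0=1$, $u_n=ku_{n-1}-u_{n/2}$ for even $n>0$, and $u_n=ku_{n-1}$ for odd $n$. A block palindrome factorization (BP-factorization) of a word $w$ is a factorization $w=w_m\cdots w_1w_0w_1\cdots w_m$ with $m\ge 0$, $w_0$ a possibly empty word and $w_1,\dots,w_m$ non-empty words. Its width is $2m+1$ if $w_0$ is non-empty and $2m$ if $w_0$ is empty (i.e., the number of non-empty blocks). A largest BP-factorization of $w$ is a BP-factorization of $w$ of maximum width; the width of the largest BP-factorization of $w$ is this maximum. *)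

(* Defs.v *)
From mathcomp Require Import all_boot.
From mathcomp Require Import boolp.
Set Implicit Arguments. Unset Strict Implicit. Unset Printing Implicit Defensive.

(* Words over Sigma_k = {0,...,k-1} are sequences over 'I_k. *)

(* w is unbordered: no non-empty proper prefix equals the suffix of the same length.
   (The empty word is unbordered.) *)
Definition unbordered (T : eqType) (w : seq T) : bool :=
  all (fun i => take i w != drop (size w - i) w) (iota 1 (size w).-1).

Definition u (k n : nat) : nat :=
  #|[set w : n.-tuple 'I_k | unbordered (val w)]|.

(* BP-factorization w = w_m ... w_1 w_0 w_1 ... w_m, with blocks = [:: w_1; ...; w_m]
   all non-empty, and w0 possibly empty. *)
Definition is_BPfact (T : eqType) (w : seq T) (blocks : seq (seq T)) (w0 : seq T) : Prop :=
  all (fun b => b != [::]) blocks /\ w = flatten (rev blocks) ++ w0 ++ flatten blocks.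

(* width = number of non-empty blocks *)
Definition BPwidth (T : eqType) (blocks : seq (seq T)) (w0 : seq T) : nat :=
  2 * size blocks + (w0 != [::]).

Definition largest_BPwidth (T : eqType) (w : seq T) (t : nat) : Prop :=
  (exists blocks w0, is_BPfact w blocks w0 /\ BPwidth blocks w0 = t) /\
  (forall blocks w0, is_BPfact w blocks w0 -> BPwidth blocks w0 <= t).

Definition IB (k n t : nat) : nat :=
  #|[set w : n.-tuple 'I_k | `[< largest_BPwidth (val w) t >]]|.

(* Main.v *)
Require Import Defs.
From mathcomp Require Import all_boot.
From mathcomp Require Import boolp.
From mathcomp Require Import zify.
Set Implicit Arguments. Unset Strict Implicit. Unset Printing Implicit Defensive.

Section Words.
Variable T : eqType.
Implicit Types (w v x y z M N c : seq T).

Lemma ubP w : reflect (forall j, 0 < j < size w -> take j w != drop (size w - j) w)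
                      (unbordered w).
Proof.
apply: (iffP allP) => H j.
- move=> Hj; apply: H; rewrite mem_iota; lia.
- rewrite mem_iota => Hj; apply: H; lia.
Qed.

Lemma cat3_inj a b c d e f : size a = size d -> size b = size e ->
  a ++ b ++ c = d ++ e ++ f -> [/\ a = d, b = e & c = f].
Proof.
move=> h1 h2 /eqP; rewrite eqseq_cat // => /andP [/eqP -> ].
by rewrite eqseq_cat // => /andP [/eqP -> /eqP ->].
Qed.

Lemma overlap v x : v = take (size v) x -> v = drop (size x - size v) x ->
  size v < size x < 2 * size v -> ~~ unbordered v.
Proof.
move=> h1 h2 hs; apply/ubP => H.
have hj : 0 < 2 * size v - size x < size v by lia.
move/negP: (H _ hj); apply; apply/eqP.
have -> : size v - (2 * size v - size x) = size x - size v by lia.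
have hjd : 2 * size v - size x + (size x - size v) = size v by lia.
move: hjd; set j := 2 * size v - size x; set d := size x - size v => hjd.
by rewrite {1}h2 {2}h1 take_drop hjd.
Qed.

Lemma split_border v x : v = take (size v) x -> v = drop (size x - size v) x ->
  2 * size v <= size x -> x = v ++ drop (size v) (take (size x - size v) x) ++ v.
Proof.
move=> h1 h2 hs.
have had : size v <= size x - size v by lia.
move: had; set a := size v; set d := size x - size v => had.
rewrite {2}h2 {1}h1 -(take_takel x had) catA cat_take_drop.
by rewrite cat_take_drop.
Qed.

Lemma ub_no_border v M j : 0 < j < size v -> unbordered v ->
  take j (v ++ M ++ v) != drop (size (v ++ M ++ v) - j) (v ++ M ++ v).
Proof.
move=> hj /ubP H; have := H j hj.
rewrite takel_cat; last lia.
rewrite catA drop_cat size_cat !size_cat.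
case: ifP => [|_]; first lia.
by have -> : size v + size M + size v - j - (size v + size M) = size v - j by lia.
Qed.

Lemma decomp w : ~~ unbordered w ->
  exists v M, [/\ w = v ++ M ++ v, unbordered v & 0 < size v].
Proof.
move=> /ubP Hn.
have ex : exists j, (0 < j < size w) && (take j w == drop (size w - j) w).
  apply: contra_notP Hn => H j hj; apply/negP => /eqP e; apply: H; exists j.
  by rewrite hj e eqxx.
case: (ex_minnP ex) => j /andP [hj /eqP e] hmin.
have ubv : unbordered (take j w).
  apply/ubP => j' hj'; apply/negP => /eqP e'.
  have : j <= j'; last first.
    rewrite size_takel in hj'; lia.
  apply: hmin; rewrite size_takel in hj'; last lia.
  apply/andP; split; first lia.
  rewrite -(take_takel w (_ : j' <= j)); last lia.
  rewrite e' size_takel; last lia.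
  rewrite e drop_drop.
  by have -> : j - j' + (size w - j) = size w - j' by lia.
have sv : size (take j w) = j by rewrite size_takel //; lia.
have h2 : 2 * j <= size w.
  rewrite leqNgt; apply/negP => hlt.
  have := overlap (v := take j w) (x := w); rewrite sv ubv => H.
  have hh : j < size w < 2 * j by lia.
  by move: (H erefl e hh).
exists (take j w), (drop j (take (size w - j) w)); split => //; last lia.
by rewrite {1}(split_border (v := take j w) (x := w)) ?sv.
Qed.


Lemma nz v : 0 < size v -> (v != [::]) = true.
Proof. by case: v. Qed.

Definition mid (bs : seq (seq T)) w0 := flatten (rev bs) ++ w0 ++ flatten bs.
Notation LW := (@largest_BPwidth T).

Lemma mid_rcons bs x w0 : mid (rcons bs x) w0 = x ++ mid bs w0 ++ x.
Proof. by rewrite /mid rev_rcons /= flatten_rcons -!catA. Qed.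

Lemma width_rcons (bs : seq (seq T)) x w0 : BPwidth (rcons bs x) w0 = (BPwidth bs w0).+2.
Proof. rewrite /BPwidth size_rcons; lia. Qed.

Lemma BP_rcons w bs x w0 : is_BPfact w (rcons bs x) w0 <->
  [/\ x != [::], is_BPfact (mid bs w0) bs w0 & w = x ++ mid bs w0 ++ x].
Proof.
rewrite /is_BPfact all_rcons -/(mid _ _) -/(mid _ _) mid_rcons; split.
- by case=> /andP [-> ->] ->.
- by case=> -> [-> _] ->.
Qed.

Lemma size_mid bs w0 : all (fun b => b != [::]) bs ->
  2 * size bs + (w0 != [::]) <= size (mid bs w0).
Proof.
rewrite /mid !size_cat !size_flatten /shape map_rev sumn_rev => H.
suff : size bs <= sumn [seq size i | i <- bs].
  set S := sumn _; case: w0 => [|a w0] /=; lia.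
elim: bs H => //= b bs IH /andP [hb /IH]; case: b hb => //= *; lia.
Qed.

Lemma drop_suffix (a b : seq T) j : j <= size b -> drop (size (a ++ b) - j) (a ++ b) = drop (size b - j) b.
Proof.
move=> hj; rewrite drop_cat size_cat; case: ifP => [|_]; first lia.
by have -> : size a + size b - j - size a = size b - j by lia.
Qed.

Lemma LW_ub w : unbordered w -> LW w (w != [::]).
Proof.
move=> ub; split.
  by exists [::], w; split => //; rewrite /is_BPfact /= cats0.
case/lastP => [|bs x] w0.
  by rewrite /is_BPfact /BPwidth /= cats0 => [[_ ->]].
case/BP_rcons => hx _ e.
have sx : 0 < size x by case: x hx e.
have hw : size w = size x + size (mid bs w0) + size x by rewrite e !size_cat; lia.
move/ubP: ub => /(_ (size x) ltac:(lia)); rewrite {1}e take_size_cat //.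
by rewrite e catA drop_suffix // subnn drop0 eqxx.
Qed.

Lemma LW_nil w : LW w 0 -> w = [::].
Proof.
case=> _ /(_ [::] w); rewrite /is_BPfact /BPwidth /= cats0 => /(_ (conj isT erefl)).
by case: w.
Qed.

Lemma LW_uniq w t t' : LW w t -> LW w t' -> t = t'.
Proof.
case=> [[bs [w0 [h1 <-]]] H1] [[bs' [w0' [h2 <-]]] H2].
by apply/eqP; rewrite eqn_leq H1 // H2.
Qed.

Lemma LW_size w t : LW w t -> t <= size w.
Proof.
case=> [[bs [w0 [[h1 ->] <-]]] _]; exact: size_mid.
Qed.

Lemma LW_even w t : LW w t -> ~~ odd t -> ~~ odd (size w).
Proof.
case=> [[bs [w0 [[h1 ->] <-]]] _].
rewrite /BPwidth /mid !size_cat !size_flatten /shape map_rev sumn_rev.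
case: w0 => [|a w0] /=; rewrite ?addn0 ?addn1 ?odd_double ?oddS ?odd_mul /=; lia.
Qed.

Lemma LW_cat v M t : unbordered v -> 0 < size v -> LW M t -> LW (v ++ M ++ v) t.+2.
Proof.
move=> ub sv [[bs [w0 [[hbs eM] <-]]] HM]; split.
  exists (rcons bs v), w0; rewrite width_rcons; split => //.
  apply/BP_rcons; split => //; first by rewrite -size_eq0 -lt0n.
  by rewrite eM.
case/lastP => [|bs' x] w1.
  move=> _; rewrite /BPwidth /=; case: (w1 != [::]); lia.
case/BP_rcons => hx [hbs' _] e.
rewrite width_rcons ltnS ltnS.
set N := mid bs' w1 in e.
have sx : 0 < size x by case: x hx e.
have hw : size (v ++ M ++ v) = size x + size N + size x by rewrite e !size_cat; lia.
case: (ltngtP (size x) (size v)) => hxv.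
- have := ub_no_border (v := v) M (j := size x) ltac:(lia) ub.
  rewrite {1}e take_size_cat // e catA drop_suffix // subnn drop0.
  by rewrite eqxx.
-
  have h1 : v = take (size v) x.
    have := congr1 (take (size v)) e.
    by rewrite take_size_cat // takel_cat //; lia.
  have h2 : v = drop (size x - size v) x.
    have E1 : drop (size (v ++ M ++ v) - size v) (v ++ M ++ v) = v.
      by rewrite catA drop_suffix // subnn drop0.
    rewrite -{1}E1 e catA drop_suffix //; lia.
  have h3 : 2 * size v <= size x.
    rewrite leqNgt; apply/negP => hh.
    have := overlap h1 h2 ltac:(lia); by rewrite ub.
  move: (split_border h1 h2 h3); set z := drop _ _ => ex.
  rewrite ex in e.
  have eM' : M = z ++ v ++ N ++ v ++ z.
    have e' : v ++ M ++ v = v ++ (z ++ v ++ N ++ v ++ z) ++ v by rewrite e -!catA.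
    case/cat3_inj: e' => //.
    move: hw; rewrite ex !size_cat; lia.
  clear e; case: z ex eM' => [|a z'] ex eM'.
  + rewrite /= in eM'.
    have := HM (rcons bs' v) w1; rewrite width_rcons => H.
    suff /H : is_BPfact M (rcons bs' v) w1 by lia.
    apply/BP_rcons; split => //; [by rewrite -size_eq0 -lt0n | by rewrite eM' cats0].
  + have := HM (rcons (rcons bs' v) (a :: z')) w1; rewrite !width_rcons.
    move=> H; suff /H : is_BPfact M (rcons (rcons bs' v) (a :: z')) w1 by lia.
    apply/BP_rcons; split => //.
      by apply/BP_rcons; split => //; [rewrite -size_eq0 -lt0n | rewrite mid_rcons].
    by rewrite mid_rcons -/N eM' -!catA.
-
  have exv : x = v.
    have := congr1 (take (size v)) e.
    by rewrite take_size_cat // -hxv take_size_cat.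
  rewrite exv in e hw; case/cat3_inj: e => //; first by move: hw; rewrite !size_cat; lia.
  move=> _ eN _.
  by apply: HM; rewrite eN.
Qed.

Lemma LW_ex w : exists t, LW w t.
Proof.
elim: {w}(size w).+1 {-2}w (ltnSn (size w)) => // n IH w hw.
case: (boolP (unbordered w)) => ub; first by exists (w != [::]); exact: LW_ub.
case: (decomp ub) => v [M [e ubv sv]].
have : size M < n by move: hw; rewrite e !size_cat; lia.
case/IH => t ht; exists t.+2; rewrite e; exact: LW_cat.
Qed.

Lemma LW_cat_inv v M t : unbordered v -> 0 < size v -> LW (v ++ M ++ v) t.+2 -> LW M t.
Proof.
move=> ub sv h; case: (LW_ex M) => t' h'.
by have := LW_uniq h (LW_cat ub sv h') => [[->]].
Qed.

Lemma LW_ge2 w t : LW w t -> 2 <= t ->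
  exists v M, [/\ w = v ++ M ++ v, unbordered v, 0 < size v & LW M (t - 2)].
Proof.
move=> h ht.
case: (boolP (unbordered w)) => ub.
  by have := LW_uniq h (LW_ub ub); case: (w != [::]) => ?; lia.
case: (decomp ub) => v [M [e ubv sv]]; exists v, M; split => //.
apply: (LW_cat_inv ubv sv); rewrite -e.
by have -> : (t - 2).+2 = t by lia.
Qed.


Definition bord w j := (0 < j) && (2 * j <= size w) && (take j w == drop (size w - j) w).
Definition sb w := find (bord w) (iota 0 (size w)).

Lemma find_iota_spec (p : pred nat) n i : i < n -> p i -> (forall j, j < i -> ~~ p j) ->
  find p (iota 0 n) = i.
Proof.
move=> hi hp hj.
have hh : has p (iota 0 n) by apply/hasP; exists i => //; rewrite mem_iota; lia.
have := hh; rewrite has_find size_iota => hf.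
have := nth_find 0 hh; rewrite nth_iota // add0n => hpf.
case: (ltngtP (find p (iota 0 n)) i) => // h.
- by move: (hj _ h); rewrite hpf.
- by have := before_find 0 h; rewrite nth_iota // add0n hp.
Qed.

Lemma sb_cat v M : unbordered v -> 0 < size v -> sb (v ++ M ++ v) = size v.
Proof.
move=> ub sv; apply: find_iota_spec.
- rewrite !size_cat; lia.
- rewrite /bord sv take_size_cat // catA drop_suffix // subnn drop0 eqxx !size_cat /=; lia.
- move=> j hj; rewrite /bord; case: (posnP j) => [->//|j0] /=.
  by rewrite (negbTE (ub_no_border (v := v) M (j := j) ltac:(lia) ub)) andbF.
Qed.

Lemma sb_ub w : unbordered w -> sb w = size w.
Proof.
move/ubP=> ub.
have H : ~~ has (bord w) (iota 0 (size w)).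
  apply/hasPn => j; rewrite mem_iota /bord => hj.
  case: (posnP j) => [->//|j0] /=; case: leqP => //= h2.
  by apply: ub; lia.
by rewrite /sb hasNfind // size_iota.
Qed.

Lemma sb_lt w : sb w < size w -> bord w (sb w).
Proof.
move=> h.
have hh : has (bord w) (iota 0 (size w)) by rewrite has_find size_iota.
by have := nth_find 0 hh; rewrite nth_iota // add0n.
Qed.

Fixpoint cenf (f : nat) w : seq T :=
  if f is f'.+1 then
    (if sb w < size w then cenf f' (drop (sb w) (take (size w - sb w) w)) else w)
  else w.
Definition cen w := cenf (size w) w.

Lemma cenf_eq2 f1 f2 w : size w <= f1 -> size w <= f2 -> cenf f1 w = cenf f2 w.
Proof.
elim: f1 f2 w => [|f1 IH] [|f2] w h1 h2 //=.
- by case: ifP => //; lia.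
- by case: ifP => //; lia.
- case: ifP => // h; apply: IH.
  + move/sb_lt: h => /andP [/andP [h3 h4] _].
    rewrite size_drop size_take; case: ifP => _; lia.
  + move/sb_lt: h => /andP [/andP [h3 h4] _].
    rewrite size_drop size_take; case: ifP => _; lia.
Qed.

Lemma cen_cat v M : unbordered v -> 0 < size v -> cen (v ++ M ++ v) = cen M.
Proof.
move=> ub sv; rewrite /cen.
have [f E] : exists f, size (v ++ M ++ v) = f.+1.
  by exists (size (v ++ M ++ v)).-1; rewrite !size_cat; lia.
rewrite E /= sb_cat // !size_cat ifT; last lia.
have -> : size v + (size M + size v) - size v = size (v ++ M) by rewrite size_cat; lia.
rewrite catA take_size_cat // drop_size_cat //.
apply: cenf_eq2 => //; move: E; rewrite !size_cat; lia.
Qed.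

Lemma cen_ub w : unbordered w -> cen w = w.
Proof.
move=> ub; rewrite /cen; case E: (size w) => [|f] //=.
by rewrite sb_ub // E ltnn.
Qed.

Lemma C1 s t : LW s t -> ~~ odd t -> forall x y c, s = x ++ y -> size x = size y ->
  unbordered c -> 0 < size c -> LW (x ++ c ++ y) t.+1 /\ cen (x ++ c ++ y) = c.
Proof.
elim: {s}(size s).+1 {-2}s t (ltnSn (size s)) => // n IH s t hs hst ht x y c es exy ubc sc.
case: (boolP (unbordered s)) => ub.
  have := LW_uniq hst (LW_ub ub); case: s es hs hst ub => [|a s] es hs hst ub /=.
    move=> ->.
    have sx0 : size x = 0 by move: (congr1 size es); rewrite size_cat /=; lia.
    have sy0 : size y = 0 by move: (congr1 size es); rewrite size_cat /=; lia.
    rewrite (size0nil sx0) (size0nil sy0) /=.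
    by rewrite cats0; split; [have := LW_ub ubc; rewrite nz | exact: cen_ub].
  by move=> et; rewrite et in ht.
case: (decomp ub) => v [N [e ubv sv]].
have [t' ht'] := LW_ex N.
have et : t = t'.+2 by apply: LW_uniq hst _; rewrite e; exact: LW_cat.
have hsz : size s = size v + size N + size v by rewrite e !size_cat; lia.
have hxs : size s = size x + size y by rewrite es size_cat.
have x1 : x = v ++ drop (size v) x.
  have := congr1 (take (size v)) es; rewrite e take_size_cat // takel_cat; last lia.
  by move=> E; rewrite {1}E cat_take_drop.
have y1 : y = take (size y - size v) y ++ v.
  have E1 : drop (size (v ++ N ++ v) - size v) (v ++ N ++ v) = v.
    by rewrite catA drop_suffix // subnn drop0.
  rewrite -e es drop_suffix in E1; last lia.
  by rewrite -{2}E1 cat_take_drop.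
set x' := drop (size v) x in x1; set y' := take (size y - size v) y in y1.
have eN : N = x' ++ y'.
  move: e; rewrite es {1}x1 {1}y1 -!catA => e.
  have e2 : v ++ N ++ v = v ++ (x' ++ y') ++ v by rewrite -e -!catA.
  case/cat3_inj: e2 => //; move: hsz; rewrite es x1 y1 !size_cat; lia.
have [h1 h2] : LW (x' ++ c ++ y') t'.+1 /\ cen (x' ++ c ++ y') = c.
  apply: (IH N) => //.
  - move: hs; rewrite hsz; lia.
  - by move: ht; rewrite et /= negbK.
  - move: exy; rewrite x1 y1 !size_cat; lia.
have -> : x ++ c ++ y = v ++ (x' ++ c ++ y') ++ v by rewrite {1}x1 {1}y1 -!catA.
by rewrite et cen_cat //; split => //; apply: LW_cat.
Qed.

Lemma C2 w t : LW w t -> odd t -> exists x y c,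
  [/\ w = x ++ c ++ y, size x = size y, unbordered c, 0 < size c & LW (x ++ y) t.-1].
Proof.
elim: {w}(size w).+1 {-2}w t (ltnSn (size w)) => // n IH w t hw hwt ht.
case: (boolP (unbordered w)) => ub.
  have et := LW_uniq hwt (LW_ub ub).
  case: w hw hwt ub et => [|a w] hw hwt ub et; first by rewrite et in ht.
  exists [::], [::], (a :: w); split => //; first by rewrite /= cats0.
  by rewrite et /=; apply: (LW_ub (w := [::])).
case: (decomp ub) => v [M [e ubv sv]].
have [t' ht'] := LW_ex M.
have et : t = t'.+2 by apply: LW_uniq hwt _; rewrite e; exact: LW_cat.
have [x [y [c [eM exy ubc sc hxy]]]] : exists x y c,
  [/\ M = x ++ c ++ y, size x = size y, unbordered c, 0 < size c & LW (x ++ y) t'.-1].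
  apply: (IH M t') => //; last by move: ht; rewrite et /= negbK.
  move: hw; rewrite e !size_cat; lia.
exists (v ++ x), (y ++ v), c; split => //.
- by rewrite e eM -!catA.
- by rewrite !size_cat exy addnC.
- have tp : 0 < t' by move: ht; rewrite et /= negbK; case: (t').
  have -> : t.-1 = (t'.-1).+2 by rewrite et; lia.
  have -> : (v ++ x) ++ y ++ v = v ++ (x ++ y) ++ v by rewrite -!catA.
  exact: LW_cat.
Qed.

End Words.


Lemma cnt_bij (T : finType) (a b n : nat) (g : seq T -> seq T -> seq T)
  (pa pb : seq T -> seq T) (P Q R : pred (seq T)) :
  (forall x y, size x = a -> size y = b -> size (g x y) = n) ->
  (forall x y, size x = a -> size y = b -> pa (g x y) = x /\ pb (g x y) = y) ->
  (forall w, size w = n -> R w ->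
     [/\ P (pa w), Q (pb w), size (pa w) = a, size (pb w) = b & w = g (pa w) (pb w)]) ->
  (forall x y, size x = a -> size y = b -> P x -> Q y -> R (g x y)) ->
  #|[set w : n.-tuple T | R (val w)]| =
  #|[set x : a.-tuple T | P (val x)]| * #|[set y : b.-tuple T | Q (val y)]|.
Proof.
move=> Hsz Hinv Hsurj Hin.
have Hg (x : a.-tuple T) (y : b.-tuple T) : size (g x y) == n by rewrite Hsz ?size_tuple.
pose f (p : a.-tuple T * b.-tuple T) : n.-tuple T := Tuple (Hg p.1 p.2).
rewrite -cardsX -(card_in_imset (f := f)).
  apply: eq_card => w; rewrite inE; apply/idP/imsetP.
  - move=> Rw; have [Pa Qb sa sb ew] := Hsurj w (size_tuple w) Rw.
    have ha : size (pa w) == a by apply/eqP.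
    have hb : size (pb w) == b by apply/eqP.
    exists (Tuple ha, Tuple hb); first by rewrite !inE /= Pa Qb.
    by apply: val_inj.
  - case=> [[x y]]; rewrite !inE /= => /andP [Px Qy] ->.
    by apply: Hin; rewrite ?size_tuple.
move=> [x1 y1] [x2 y2] _ _ /(congr1 val) /= E.
have [e1 e2] := Hinv x1 y1 (size_tuple _) (size_tuple _).
have [e3 e4] := Hinv x2 y2 (size_tuple _) (size_tuple _).
rewrite E e3 in e1; rewrite E e4 in e2.
by congr (_, _); apply: val_inj.
Qed.

Lemma card_part (T : finType) (R : pred T) (f : T -> nat) N :
  (forall x, R x -> f x < N.+1) ->
  #|[set x | R x]| = \sum_(i < N.+1) #|[set x | R x && (f x == i)]|.
Proof.
move=> Hf.
rewrite -sum1_card (partition_big (fun x => (inord (f x) : 'I_N.+1)) xpredT) //.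
apply: eq_bigr => i _; rewrite -sum1_card; apply: eq_bigl => x.
rewrite !inE; case: (boolP (R x)) => //= Rx.
by rewrite -(inj_eq val_inj) /= inordK // Hf.
Qed.


Section Count.
Variable k : nat.
Notation W := (seq 'I_k).

Lemma IB_small n t : n < t -> IB k n t = 0.
Proof.
move=> h; rewrite /IB; apply: eq_card0 => w; rewrite inE; apply/asboolP => hw.
by have := LW_size hw; rewrite size_tuple; lia.
Qed.

Lemma IB00 : IB k 0 0 = 1.
Proof.
rewrite /IB -(card_ord 1).
have -> : [set w : 0.-tuple 'I_k | `[< largest_BPwidth (val w) 0 >]] = setT.
  apply/setP => w; rewrite !inE; apply/asboolP.
  have -> : val w = [::] by exact: size0nil (size_tuple w).
  exact: (LW_ub (w := [::])).
by rewrite cardsT card_tuple expn0 card_ord.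
Qed.

Lemma IB_oddeven n t : odd n -> ~~ odd t -> IB k n t = 0.
Proof.
move=> hn ht; rewrite /IB; apply: eq_card0 => w; rewrite inE; apply/asboolP => hw.
by have := LW_even hw ht; rewrite size_tuple hn.
Qed.

Lemma IB1 n : 0 < n -> IB k n 1 = u k n.
Proof.
move=> hn; rewrite /IB /u; apply: eq_card => w; rewrite !inE.
apply/asboolP/idP => [h|ub].
- apply/negPn/negP => nub; case: (decomp nub) => v [M [e ubv sv]].
  have [t' ht'] := LW_ex M.
  by have := LW_uniq h (eq_ind_r (fun s => largest_BPwidth s _) (LW_cat ubv sv ht') e).
- by have := LW_ub ub; rewrite nz // size_tuple.
Qed.

Lemma IB2 n : 0 < n -> IB k (2 * n) 2 = u k n.
Proof.
move=> hn; transitivity (u k n * IB k 0 0); last by rewrite IB00 muln1.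
rewrite /IB /u.
apply: (@cnt_bij _ n 0 (2 * n) (fun x y : W => x ++ y ++ x) (take n) (fun _ => [::])
  (@unbordered _) (fun s => `[< largest_BPwidth s 0 >]) (fun s => `[< largest_BPwidth s 2 >])).
- by move=> x y sx sy; rewrite !size_cat sx sy; lia.
- by move=> x y sx sy; rewrite take_size_cat // (size0nil sy).
- move=> w sw /asboolP hw; have [v [M [e ubv sv hM]]] := LW_ge2 hw (leqnn 2).
  have eM := LW_nil hM; rewrite eM /= in e.
  have svn : size v = n by move: sw; rewrite e size_cat; set s := size v; lia.
  rewrite e take_size_cat //; split => //.
  by apply/asboolP; exact: (LW_ub (w := [::])).
- move=> x y sx sy ubx /asboolP hy; apply/asboolP.
  by apply: LW_cat => //; rewrite sx.
Qed.

Lemma sb_le (w : W) : sb w <= size w.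
Proof. by rewrite /sb; have := find_size (bord w) (iota 0 (size w)); rewrite size_iota. Qed.

Lemma IB_outer n t : 2 <= t -> IB k n t =
  \sum_(i < n.+1) (if (0 < i) && (2 * i <= n) then u k i * IB k (n - 2 * i) (t - 2) else 0).
Proof.
move=> ht; rewrite {1}/IB.
rewrite (@card_part _ (fun w : n.-tuple 'I_k => `[< largest_BPwidth (val w) t >])
  (fun w : n.-tuple 'I_k => sb (val w)) n); last first.
  by move=> w _; have := sb_le w; rewrite size_tuple.
apply: eq_bigr => i _; case: ifP => hi.
- rewrite /IB /u.
  apply: (@cnt_bij _ i (n - 2 * i) n (fun x y : W => x ++ y ++ x) (take i)
            (fun w : W => drop i (take (n - i) w)) (@unbordered _)
            (fun s => `[< largest_BPwidth s (t - 2) >])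
            (fun s => `[< largest_BPwidth s t >] && (sb s == i))).
  + by move=> x y sx sy; rewrite !size_cat sx sy; lia.
  + move=> x y sx sy; rewrite (take_size_cat _ sx); split => //.
    have -> : n - i = size (x ++ y) by rewrite size_cat; lia.
    by rewrite catA take_size_cat // drop_size_cat.
  + move=> w sw /andP [/asboolP hw /eqP hs].
    have [v [M [e ubv sv hM]]] := LW_ge2 hw ht.
    have svi : size v = i by rewrite -hs e sb_cat.
    have sM : size M = n - 2 * i by move: sw; rewrite e !size_cat svi; set s := size M; lia.
    have -> : n - i = size (v ++ M) by rewrite size_cat; lia.
    rewrite e take_size_cat // catA take_size_cat // drop_size_cat //.
    by split => //; [apply/asboolP | rewrite catA].
  + move=> x y sx sy ubx /asboolP hy; apply/andP; split.
    * apply/asboolP; have -> : t = (t - 2).+2 by lia.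
      by apply: LW_cat => //; rewrite sx; move/andP: hi => [].
    * by rewrite sb_cat // sx; move/andP: hi => [].
- apply: eq_card0 => w; rewrite inE; apply/negP => /andP [/asboolP hw /eqP hs].
  have [v [M [e ubv sv hM]]] := LW_ge2 hw ht.
  move: hs; rewrite e sb_cat // => svi.
  have := size_tuple w; rewrite e !size_cat => sw.
  move: hi sw sv; rewrite -svi; set a := size v; set b := size M; lia.
Qed.

Lemma IB_cen_count n t c : odd t -> 0 < c <= n -> ~~ odd (n - c) ->
  #|[set w : n.-tuple 'I_k | `[< largest_BPwidth (val w) t >] && (size (cen (val w)) == c)]|
  = u k c * IB k (n - c) t.-1.
Proof.
move=> ht hc hnc; set h := (n - c)./2.
have h2 : n - c = h + h by rewrite /h; lia.
rewrite /IB /u.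
apply: (@cnt_bij _ c (n - c) n (fun x y : W => take h y ++ x ++ drop h y)
          (fun w : W => drop h (take (h + c) w))
          (fun w : W => take h w ++ drop (h + c) w) (@unbordered _)
          (fun s => `[< largest_BPwidth s t.-1 >])
          (fun s => `[< largest_BPwidth s t >] && (size (cen s) == c))).
- move=> x y sx sy; rewrite !size_cat size_take size_drop sx sy; case: ifP; lia.
- move=> x y sx sy.
  have st : size (take h y) = h by rewrite size_takel // sy; lia.
  have -> : h + c = size (take h y ++ x) by rewrite size_cat st sx.
  rewrite catA take_size_cat // drop_size_cat //; split => //.
  by rewrite drop_size_cat // -catA take_size_cat // cat_take_drop.
- move=> w sw /andP [/asboolP hw /eqP hs].
  have [x [y [c' [e exy ubc sc hxy]]]] := C2 hw ht.
  have [_ ec] := C1 hxy (ltac:(move: ht; case: (t) => //= t' ->//)) (erefl _) exy ubc sc.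
  rewrite -e in ec; rewrite ec in hs.
  have sx : size x = h by move: sw exy hs; rewrite e !size_cat; set a := size x; set b := size y; set d := size c'; lia.
  have -> : h + c = size (x ++ c') by rewrite size_cat sx hs.
  rewrite e catA.
  have E1 : take (size (x ++ c')) ((x ++ c') ++ y) = x ++ c' := take_size_cat _ erefl.
  have E2 : drop (size (x ++ c')) ((x ++ c') ++ y) = y := drop_size_cat _ erefl.
  have E3 : drop h (x ++ c') = c' := drop_size_cat _ sx.
  have E4 : take h ((x ++ c') ++ y) = x by rewrite -catA take_size_cat.
  rewrite E1 E2 E3 E4; split => //; try by apply/asboolP.
  + by rewrite size_cat -exy sx h2.
  + by rewrite (take_size_cat _ sx) (drop_size_cat _ sx) -catA.
- move=> x y sx sy ubx /asboolP hy; apply/andP.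
  have ev : ~~ odd t.-1 by move: ht; case: (t) => //= t' ->.
  have es : size (take h y) = size (drop h y).
    rewrite size_drop sy size_takel; last by rewrite sy; lia.
    lia.
  have sx0 : 0 < size x by rewrite sx; lia.
  have [H1 H2] := C1 hy ev (esym (cat_take_drop h y)) es ubx sx0.
  split; first by apply/asboolP; move: H1; case: (t) ht.
  by rewrite H2 sx.
Qed.

End Count.


Lemma sum_restrict N B (F G : nat -> nat) : B < N ->
  (forall i, i < N -> 0 < i <= B -> F i = G i) ->
  (forall i, i < N -> ~~ (0 < i <= B) -> F i = 0) ->
  \sum_(i < N) F i = \sum_(1 <= i < B.+1) G i.
Proof.
move=> hB h1 h2.
rewrite -(big_mkord xpredT) (@big_cat_nat _ _ _ 1 0 N) //=; last by lia.
rewrite big_nat1 h2 //; last by lia.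
rewrite (@big_cat_nat _ _ _ B.+1 1 N) //=.
have hz : \sum_(B.+1 <= i < N) F i = 0.
  rewrite big_nat_cond big1 // => i /andP [/andP [hi1 hi2] _]; apply: h2 => //; lia.
rewrite hz.
rewrite add0n addn0; apply: eq_big_nat => i hi; apply: h1; lia.
Qed.

Section Count2.
Variable k : nat.

Definition cc n i := if odd n then 2 * i - 1 else 2 * i.

Lemma cen_info n t (w : n.-tuple 'I_k) : odd t -> largest_BPwidth (val w) t ->
  0 < size (cen (val w)) <= n /\ ~~ odd (n - size (cen (val w))).
Proof.
move=> ht hw.
have [x [y [c' [e exy ubc sc hxy]]]] := C2 hw ht.
have [_ ec] := C1 hxy (ltac:(move: ht; case: (t) => //= t' ->//)) (erefl _) exy ubc sc.
rewrite -e in ec; rewrite ec.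
have := size_tuple w; rewrite e !size_cat.
move: exy sc; set a := size x; set b := size y; set d := size c'; lia.
Qed.

Lemma IB_center n t : odd t -> IB k n t =
  \sum_(i < n.+1) (if (0 < i) && (cc n i <= n) then u k (cc n i) * IB k (n - cc n i) t.-1 else 0).
Proof.
move=> ht; rewrite {1}/IB.
rewrite (@card_part _ (fun w : n.-tuple 'I_k => `[< largest_BPwidth (val w) t >])
  (fun w : n.-tuple 'I_k => (size (cen (val w))).+1./2) n); last first.
  by move=> w /asboolP hw; have := cen_info ht hw; lia.
apply: eq_bigr => i _; case: ifP => hi.
- have hc1 : 0 < cc n i <= n by move: hi; rewrite /cc; case: (boolP (odd n)); lia.
  have hc2 : ~~ odd (n - cc n i) by rewrite /cc; case: (boolP (odd n)); lia.
  rewrite -(IB_cen_count k ht hc1 hc2).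
  apply: eq_card => w; rewrite !inE.
  case: (boolP `[< _ >]) => //= /asboolP hw.
  have := cen_info ht hw; rewrite /cc; set s := size _.
  by case: (boolP (odd n)) => hn hs; apply/eqP/eqP; lia.
- apply: eq_card0 => w; rewrite !inE; apply/negP => /andP [/asboolP hw /eqP hs].
  have := cen_info ht hw; move: hi hs; rewrite /cc; set s := size _.
  by case: (boolP (odd n)) => hn; lia.
Qed.

End Count2.

Theorem theorem2 (k : nat) (hk : 2 <= k) :
  IB k 0 0 = 1 /\
  (forall n, 1 <= n -> IB k (2 * n) 2 = u k n /\ IB k n 1 = u k n) /\
  (forall n t, 3 <= t ->
     (~~ odd n -> ~~ odd t ->
        IB k n t = \sum_(1 <= i < (n + 2 - t)./2 .+1) u k i * IB k (n - 2 * i) (t - 2)) /\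
     (~~ odd n -> odd t ->
        IB k n t = \sum_(1 <= i < (n + 1 - t)./2 .+1) u k (2 * i) * IB k (n - 2 * i) (t - 1)) /\
     (odd n -> ~~ odd t -> IB k n t = 0) /\
     (odd n -> odd t ->
        IB k n t = \sum_(1 <= i < (n + 2 - t)./2 .+1)
                      u k (2 * i - 1) * IB k (n - 2 * i + 1) (t - 1))).
Proof.
split; first exact: IB00.
split; first by move=> n hn; split; [exact: IB2 | exact: IB1].
move=> n t ht; split; [|split; [|split]].
- move=> hn het; rewrite IB_outer; last lia.
  apply: (@sum_restrict n.+1 _ (fun i => if (0 < i) && (2 * i <= n) then u k i * IB k (n - 2 * i) (t - 2) else 0)); first lia.
  + by move=> i hi1 hi2; rewrite ifT //; lia.
  + move=> i hi1 hi2; case: ifP => // hc.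
    rewrite IB_small ?muln0 //; lia.
- move=> hn hot; rewrite IB_center //.
  apply: (@sum_restrict n.+1 _ (fun i => if (0 < i) && (cc n i <= n) then u k (cc n i) * IB k (n - cc n i) t.-1 else 0)); first lia.
  + move=> i hi1 hi2; rewrite /cc (negbTE hn) ifT; last lia.
    by have -> : t.-1 = t - 1 by lia.
  + move=> i hi1 hi2; rewrite /cc (negbTE hn); case: ifP => // hc.
    rewrite IB_small ?muln0 //; lia.
- exact: IB_oddeven.
- move=> hn hot; rewrite IB_center //.
  apply: (@sum_restrict n.+1 _ (fun i => if (0 < i) && (cc n i <= n) then u k (cc n i) * IB k (n - cc n i) t.-1 else 0)); first lia.
  + move=> i hi1 hi2; rewrite /cc hn ifT; last lia.
    have -> : t.-1 = t - 1 by lia.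
    by have -> : n - (2 * i - 1) = n - 2 * i + 1 by lia.
  + move=> i hi1 hi2; rewrite /cc hn; case: ifP => // hc.
    rewrite IB_small ?muln0 //; lia.
Qed.
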